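(* $2^{\omega}\in I_0^{*}$; that is, $2^\omega$ is the union of countably many sets $A\subseteq 2^\omega$ each of which has the property that there is a nonempty perfect set $P\subseteq 2^\omega$ such that the sets $A\oplus x$, $x\in P$, are pairwise disjoint.
   Context: $2^\omega$ is the Cantor group with coordinatewise addition modulo 2, denoted $\oplus$; $A\oplus x=\{a\oplus x:a\in A\}$. $I_0^*$ is the $\sigma$-ideal on $2^\omega$ generated by all (not necessarily Borel) sets $A\subseteq 2^\omega$ for which there is a nonempty perfect $P\subseteq 2^\omega$ with $\{A\oplus x:x\in P\}$ pairwise disjoint. *)

(* Defs.v *)
(* The Cantor space 2^omega is modelled as nat -> bool,
   with the product (first-n-coordinates) topology. *)
From Stdlib Require Import Arith.

Definition cantor := nat -> bool.

Definition cplus (a x : cantor) : cantor := fun n => xorb (a n) (x n).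

Definition translate (A : cantor -> Prop) (x : cantor) : cantor -> Prop :=
  fun z => exists a, A a /\ z = cplus a x.

Definition agree (n : nat) (x y : cantor) : Prop :=
  forall k, k < n -> x k = y k.

Definition closed_set (P : cantor -> Prop) : Prop :=
  forall x, (forall n, exists y, P y /\ agree n x y) -> P x.

Definition nonempty_perfect (P : cantor -> Prop) : Prop :=
  (exists x, P x) /\ closed_set P /\
  (forall x, P x -> forall n, exists y, P y /\ y <> x /\ agree n x y).

Definition disjoint (B C : cantor -> Prop) : Prop :=
  forall z, B z -> C z -> False.

Definition I0_generator (A : cantor -> Prop) : Prop :=
  exists P, nonempty_perfect P /\
    forall x y, P x -> P y -> x <> y -> disjoint (translate A x) (translate A y).

Definition in_I0star (B : cantor -> Prop) : Prop :=
  exists A : nat -> (cantor -> Prop),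
    (forall n, I0_generator (A n)) /\ (forall z, B z -> exists n, A n z).

(* Main.v *)
Require Import Defs.
From Stdlib Require Import Arith Lia List Bool Cantor FunctionalExtensionality PropExtensionality ClassicalEpsilon Classical.

Fixpoint matches (x : cantor) (i : nat) (l : list bool) : bool :=
  match l with nil => true | b :: l' => Bool.eqb (x i) b && matches x (S i) l' end.

Fixpoint dlist (n k : nat) : list bool :=
  match n with 0 => nil | S n' => let (a, b) := Cantor.of_nat k in (a =? 0) :: dlist n' b end.

Definition emb (m : nat) (x : cantor) : cantor := fun q =>
  match Cantor.of_nat q with
  | (0, b) => x b
  | (S _, b) => let (m', r) := Cantor.of_nat b in let (n, k) := Cantor.of_nat r in
                (Nat.eqb m' m) && matches x 0 (dlist n k)
  end.

Definition read (y : cantor) : cantor := fun i => y (Cantor.to_nat (0, i)).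
Definition PP (m : nat) (y : cantor) : Prop := forall q, y q = emb m (read y) q.
Definition L (q : nat) : nat := fst (Cantor.of_nat (snd (Cantor.of_nat (snd (Cantor.of_nat q))))).

Lemma read_emb m x i : read (emb m x) i = x i.
Proof. unfold read, emb. rewrite Cantor.cancel_of_to. reflexivity. Qed.

Lemma matches_ext f g l : forall i, (forall j, i <= j < i + length l -> f j = g j) ->
  matches f i l = matches g i l.
Proof.
  induction l as [|b l IH]; intros i H; simpl; auto.
  rewrite (H i) by (simpl; lia). rewrite (IH (S i)); auto.
  intros j Hj; apply H; simpl; lia.
Qed.

Lemma dlist_length n : forall k, length (dlist n k) = n.
Proof.
  induction n; intros k; simpl; auto. destruct (Cantor.of_nat k). simpl. auto.
Qed.

Lemma emb_local m f g q : (forall i, i <= q + L q -> f i = g i) -> emb m f q = emb m g q.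
Proof.
  intros H. unfold L in H. unfold emb.
  pose proof (Cantor.cancel_to_of q) as Eq.
  destruct (Cantor.of_nat q) as [a b] eqn:E. simpl in H.
  destruct a as [|a].
  - apply H. pose proof (Cantor.to_nat_non_decreasing 0 b). lia.
  - destruct (Cantor.of_nat b) as [m' r]. simpl in H.
    destruct (Cantor.of_nat r) as [n k]. simpl in H. f_equal.
    apply matches_ext. rewrite dlist_length. intros j Hj. apply H. lia.
Qed.

Lemma emb_ext m f g q : (forall i, f i = g i) -> emb m f q = emb m g q.
Proof. intros H; apply emb_local; auto. Qed.

Lemma PP_emb m x : PP m (emb m x).
Proof. intros q. apply emb_ext. intros i. rewrite read_emb. reflexivity. Qed.

Lemma exN : forall M, exists N, forall i, i <= M -> Cantor.to_nat (0, i) < N.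
Proof.
  induction M as [|M [N HN]].
  - exists (S (Cantor.to_nat (0,0))). intros i Hi. assert (i = 0) by lia. subst. lia.
  - exists (N + S (Cantor.to_nat (0, S M))). intros i Hi.
    destruct (Nat.eq_dec i (S M)). subst; lia. specialize (HN i ltac:(lia)). lia.
Qed.

Lemma exJ : forall n, exists J, forall k, k < n -> k + L k < J.
Proof.
  induction n as [|n [J HJ]].
  - exists 0. intros; lia.
  - exists (J + S (n + L n)). intros k Hk.
    destruct (Nat.eq_dec k n). subst; lia. specialize (HJ k ltac:(lia)). lia.
Qed.

Lemma PP_closed m : closed_set (PP m).
Proof.
  intros y H q.
  destruct (exN (q + L q)) as [N HN].
  destruct (H (N + S q)) as [y' [Hy' Ha]].
  rewrite (Ha q) by lia. rewrite Hy'.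
  apply emb_local. intros i Hi. unfold read. symmetry. apply Ha.
  specialize (HN i Hi). lia.
Qed.

Lemma PP_perfect m : nonempty_perfect (PP m).
Proof.
  split; [|split].
  - exists (emb m (fun _ => false)). apply PP_emb.
  - apply PP_closed.
  - intros y Hy n. destruct (exJ n) as [J HJ].
    set (x := read y).
    set (x' := fun i => if i =? J then negb (x i) else x i).
    exists (emb m x'). split; [apply PP_emb|split].
    + intros E. assert (E2 := f_equal (fun f => f (Cantor.to_nat (0, J))) E). simpl in E2.
      change (read (emb m x') J = read y J) in E2. rewrite read_emb in E2.
      unfold x' in E2. rewrite Nat.eqb_refl in E2. fold x in E2.
      destruct (x J); discriminate.
    + intros k Hk. rewrite Hy. apply emb_local. intros i Hi. unfold x'.
      specialize (HJ k Hk). destruct (Nat.eqb_spec i J). lia. reflexivity.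
Qed.

Definition zero : cantor := fun _ => false.
Definition lsum (F : list (nat * cantor)) : cantor :=
  fold_right (fun p acc => cplus (emb (fst p) (snd p)) acc) zero F.
Definition W (z : cantor) : Prop := exists F, z = lsum F.

Lemma lsum_app F G : lsum (F ++ G) = cplus (lsum F) (lsum G).
Proof.
  induction F as [|p F IH]; simpl; apply functional_extensionality; intros n.
  - reflexivity.
  - rewrite IH. unfold cplus. destruct (emb _ _ n), (lsum F n), (lsum G n); reflexivity.
Qed.

Lemma W_plus a b : W a -> W b -> W (cplus a b).
Proof. intros [F ->] [G ->]. exists (F ++ G). symmetry; apply lsum_app. Qed.

Definition c (v : cantor) : cantor := epsilon (inhabits zero) (fun t => W (cplus v t)).

Lemma c_spec v : W (cplus v (c v)).
Proof.
  unfold c. apply epsilon_spec. exists v. exists nil. simpl.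
  apply functional_extensionality; intros n. unfold cplus, zero. destruct (v n); reflexivity.
Qed.

Lemma c_eq v w : W (cplus v w) -> c v = c w.
Proof.
  intros H. unfold c. f_equal. apply functional_extensionality; intros t.
  apply propositional_extensionality. split; intros H2.
  - replace (cplus w t) with (cplus (cplus v w) (cplus v t)). apply W_plus; auto.
    apply functional_extensionality; intros n. unfold cplus.
    destruct (v n), (w n), (t n); reflexivity.
  - replace (cplus v t) with (cplus (cplus v w) (cplus w t)). apply W_plus; auto.
    apply functional_extensionality; intros n. unfold cplus.
    destruct (v n), (w n), (t n); reflexivity.
Qed.

Definition A (m : nat) (v : cantor) : Prop :=
  exists F, cplus v (c v) = lsum F /\ Forall (fun p => fst p <> m) F.

Fixpoint pref (u : cantor) (i n : nat) : list bool :=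
  match n with 0 => nil | S n' => u i :: pref u (S i) n' end.

Lemma pref_length u n : forall i, length (pref u i n) = n.
Proof. induction n; intros; simpl; auto. Qed.

Lemma matches_pref u n : forall i, matches u i (pref u i n) = true.
Proof. induction n; intros; simpl; auto. rewrite Bool.eqb_reflx. simpl. auto. Qed.

Lemma matches_pref_diff u u' j : u j <> u' j -> forall n i, i <= j < i + n ->
  matches u' i (pref u i n) = false.
Proof.
  intros D. induction n; intros i Hi; simpl. lia.
  destruct (Nat.eq_dec i j).
  - subst. destruct (u j), (u' j); simpl; congruence.
  - rewrite (IHn (S i)) by lia. apply andb_false_r.
Qed.

Lemma dlist_surj : forall l, exists k, dlist (length l) k = l.
Proof.
  induction l as [|b l [k Hk]].
  - exists 0. reflexivity.
  - exists (Cantor.to_nat (if b then 0 else 1, k)). cbn [dlist length].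
    rewrite Cantor.cancel_of_to. rewrite Hk. destruct b; reflexivity.
Qed.

Lemma emb_at m' z m n k :
  emb m' z (Cantor.to_nat (1, Cantor.to_nat (m, Cantor.to_nat (n, k)))) =
  (m =? m') && matches z 0 (dlist n k).
Proof.
  unfold emb. rewrite Cantor.cancel_of_to. cbv beta iota.
  rewrite Cantor.cancel_of_to. cbv beta iota.
  rewrite Cantor.cancel_of_to. reflexivity.
Qed.

Lemma lsum_tag m n k F : Forall (fun p => fst p <> m) F ->
  lsum F (Cantor.to_nat (1, Cantor.to_nat (m, Cantor.to_nat (n, k)))) = false.
Proof.
  induction 1 as [|p F Hp HF IH]. reflexivity.
  change (xorb (emb (fst p) (snd p) (Cantor.to_nat (1, Cantor.to_nat (m, Cantor.to_nat (n, k)))))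
    (lsum F (Cantor.to_nat (1, Cantor.to_nat (m, Cantor.to_nat (n, k))))) = false).
  rewrite IH, emb_at.
  destruct (Nat.eqb_spec m (fst p)). congruence. reflexivity.
Qed.

Fixpoint maxl (F : list (nat * cantor)) : nat :=
  match F with nil => 0 | p :: F' => Nat.max (fst p) (maxl F') end.

Lemma maxl_spec F : Forall (fun p => fst p <> S (maxl F)) F.
Proof.
  assert (forall G, Forall (fun p => fst p <= maxl G) G).
  { induction G; simpl; constructor. cbv beta. apply Nat.le_max_l.
    eapply Forall_impl; [|exact IHG]. intros p Hp; cbv beta in *; pose proof (Nat.le_max_r (fst a) (maxl G)); lia. }
  eapply Forall_impl; [|exact (H F)]. intros p Hp. cbv beta in *. lia.
Qed.

Lemma gen m : I0_generator (A m).
Proof.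
  exists (PP m). split. apply PP_perfect.
  intros x y Hx Hy Hxy z [a [Ha Ea]] [a' [Ha' Ea']].
  assert (Eaa : cplus a a' = cplus x y).
  { apply functional_extensionality; intros n.
    assert (E := f_equal (fun f => f n) (eq_trans (eq_sym Ea) Ea')). simpl in E.
    unfold cplus in *. destruct (a n), (a' n), (x n), (y n); simpl in *; congruence. }
  assert (Ex : x = emb m (read x)) by (apply functional_extensionality; exact Hx).
  assert (Ey : y = emb m (read y)) by (apply functional_extensionality; exact Hy).
  assert (Wa : W (cplus a a')).
  { rewrite Eaa. exists ((m, read x) :: (m, read y) :: nil). simpl.
    apply functional_extensionality; intros n. unfold cplus, zero.
    rewrite <- Ex, <- Ey. destruct (y n); reflexivity. }
  pose proof (c_eq _ _ Wa) as Ec.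
  destruct Ha as [F [HF TF]]. destruct Ha' as [F' [HF' TF']].
  assert (Huu : read x <> read y).
  { intros E. apply Hxy. rewrite Ex, Ey, E. reflexivity. }
  destruct (not_all_ex_not _ _ (fun H => Huu (functional_extensionality _ _ H))) as [j Hj].
  destruct (dlist_surj (pref (read x) 0 (S j))) as [k Hk].
  rewrite pref_length in Hk.
  set (q := Cantor.to_nat (1, Cantor.to_nat (m, Cantor.to_nat (S j, k)))).
  assert (E1 : xorb (lsum F q) (lsum F' q) = xorb (x q) (y q)).
  { rewrite <- HF, <- HF', <- Ec. assert (E3 := f_equal (fun f => f q) Eaa). simpl in E3. unfold cplus in *.
    destruct (a q), (a' q), (c a q), (x q), (y q); simpl in *; congruence. }
  unfold q in E1. rewrite !lsum_tag in E1 by assumption.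
  rewrite Ex, Ey in E1. rewrite !emb_at, Nat.eqb_refl, Hk in E1. rewrite !andb_true_l in E1.
  rewrite matches_pref, (matches_pref_diff _ _ j Hj (S j) 0) in E1 by lia.
  discriminate.
Qed.

Theorem theorem3p1 : in_I0star (fun _ : cantor => True).
Proof.
  exists A. split. apply gen.
  intros z _. destruct (c_spec z) as [F HF].
  exists (S (maxl F)). exists F. split; auto. apply maxl_spec.
Qed.
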